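(* Let $k$ be a positive integer such that $k+1$ is an odd prime, and let $p>k(k+1)$ be an odd prime. Then every $\mathbf u\in\pi_{(k+1)p\to p}^{-1}\big((1,2,\ldots,k)\big)\subseteq\mathbb{Z}_{p,k+1}^k$ is $(k,p,k+1)$-proper. In particular, $(1,2,\ldots,k)\in\mathbb{Z}_{p,1}^k$ is eventually $(k,p)$-proper.
   Context: For $x\in\mathbb{R}$, $\lVert x\rVert$ is the distance from $x$ to the nearest integer. $\mathbb{Z}_n$ denotes integers modulo $n$; $\mathbb{Z}_{p,l}:=\mathbb{Z}_{pl}\setminus p\mathbb{Z}_l$ (residues mod $pl$ not divisible by $p$); $\pi_{m\to n}$ is the natural projection $\mathbb{Z}_m\to\mathbb{Z}_n$ for $n\mid m$, coordinatewise on tuples. A tuple $\mathbf v\in\mathbb{Z}_{p,l}^k$ is $(k,p,l)$-proper if either there is an index $i$ with $\gcd(l,v_1,\ldots,v_{i-1},v_{i+1},\ldots,v_k)>1$, or there is $t\in\frac1{lp}\mathbb{Z}$ with $\lVert tv_j\rVert\ge\frac1{k+1}$ for all $j$; otherwise it is $(k,p,l)$-improper, and $I(k,p,l)$ is the set of improper tuples. $\mathbf v\in\mathbb{Z}_{p,1}^k$ is eventually $(k,p)$-proper if $\mathbf v\notin\pi_{lp\to p}I(k,p,l)$ for some positive integer $l$. *)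

(* Defs.v *)
From mathcomp Require Import all_boot all_order all_algebra.
Unset Printing Implicit Defensive.
Import Order.TTheory GRing.Theory Num.Theory.
Local Open Scope ring_scope.

(* ||x||: distance from x to the nearest integer (x rational suffices,
   since t lies in (1/(lp))Z and the v_j are integers). *)
Definition dist_nint (x : rat) : rat :=
  Num.min (x - (Num.floor x)%:~R) ((Num.floor x + 1)%:~R - x).

(* Residues mod p*l represented by their least nonnegative representative. *)
Definition in_Zpl (p l x : nat) : bool := ((x < p * l) && ~~ (p %| x))%N.

(* v : 'I_k -> nat (coordinate j corresponds to index j+1) lies in Z_{p,l}^k *)
Definition tuple_in_Zpl (k p l : nat) (v : 'I_k -> nat) : Prop :=
  forall j : 'I_k, in_Zpl p l (v j).

Definition kpl_proper (k p l : nat) (v : 'I_k -> nat) : Prop :=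
  (exists i : 'I_k, (1 < gcdn l (\big[gcdn/0%N]_(j < k | j != i) v j))%N)
  \/
  (exists a : int, forall j : 'I_k,
      1 / (k.+1)%:R <= dist_nint ((a%:~R / (l * p)%:R) * (v j)%:R)).

Definition improper (k p l : nat) (v : 'I_k -> nat) : Prop := ~ kpl_proper k p l v.

Definition proj_mod (k p : nat) (v : 'I_k -> nat) : 'I_k -> nat :=
  fun j => (v j %% p)%N.

Definition eventually_proper (k p : nat) (w : 'I_k -> nat) : Prop :=
  exists l : nat, (0 < l)%N /\
    ~ (exists v : 'I_k -> nat,
         tuple_in_Zpl k p l v /\ improper k p l v /\ proj_mod k p v = w).

(* Main.v *)
Require Import Defs.
From mathcomp Require Import all_boot all_order all_algebra.
From mathcomp Require Import zify ring lra.
From Stdlib Require Import Lia.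
Import Order.TTheory GRing.Theory Num.Theory.

Module Aux.
Local Open Scope ring_scope.
Lemma arith1 (S k : nat) : (0 < k)%N -> (S <= k.*2.-1)%N -> (S.+1 - k <= k)%N.
Proof. rewrite -!subn1 -!muln2; lia. Qed.
Lemma arith2 (k : nat) : (0 < k)%N -> (1 + k.-1 * 2 <= k.*2.-1)%N.
Proof. rewrite -!subn1 -!muln2; lia. Qed.

Section Core.
Variable q : nat.
Hypothesis Hq : prime q.
Local Notation F := 'F_q.

Lemma cardF : #|F| = q. Proof. exact: card_Fp. Qed.

Lemma exists_not_root (P : {poly F}) : P != 0 -> (size P <= q.-1)%N ->
  exists x, P.[x] != 0.
Proof.
move=> P0 sP; case: (pickP (fun x => P.[x] != 0)) => [x Hx|H]; first by exists x.
have := max_poly_roots P0 (rs := enum F).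
rewrite enum_uniq -cardE cardF.
have -> : all (root P) (enum F).
  by apply/allP => x _; rewrite /root; move/negbFE: (H x).
move=> /(_ isT isT) h; have := prime_gt0 Hq; move=> hq0; have := leq_trans h sP; rewrite -subn1; lia.
Qed.

Lemma psum0 (j : nat) : (j < q.-1)%N -> \sum_(x : F) x ^+ j = 0.
Proof.
move=> hj.
case: j hj => [|j] hj.
  under eq_bigr do rewrite expr0.
  by rewrite sumr_const cardF pchar_Fp_0.
have [a a0 aj] : exists2 a : F, a != 0 & a ^+ j.+1 != 1.
  case: (pickP (fun a : F => (a != 0) && (a ^+ j.+1 != 1))) => [a /andP[? ?]|H]; first by exists a.
  have P0 : ('X^(j.+1) - 1 : {poly F}) != 0.
    by rewrite -size_poly_eq0 size_XnsubC.
  have := max_poly_roots P0 (rs := enum (predC1 (0 : F))).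
  rewrite enum_uniq -cardE cardC1 cardF size_XnsubC //.
  have -> : all (root ('X^(j.+1) - 1)) (enum (predC1 (0 : F))).
    apply/allP => x; rewrite mem_enum inE => x0.
    by rewrite /root !hornerE; move: (H x); rewrite /= x0 /= => /negbFE; rewrite subr_eq0.
  move=> /(_ isT isT) h; move: hj; rewrite -subn1; lia.
have e : \sum_(x : F) x ^+ j.+1 = a ^+ j.+1 * \sum_(x : F) x ^+ j.+1.
  rewrite {1}(reindex_inj (mulfI a0)) /= mulr_sumr.
  by apply: eq_bigr => x _; rewrite exprMn.
have : (a ^+ j.+1 - 1) * \sum_(x : F) x ^+ j.+1 = 0.
  by rewrite mulrBl mul1r -e subrr.
by move/eqP; rewrite mulf_eq0 subr_eq0 (negbTE aj) /= => /eqP.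
Qed.


Lemma fsize (a b : F) : (size (a *: 'X + b%:P)%R <= (a != 0%R).+1)%N.
Proof.
case: eqP => [->|_]; first by rewrite scale0r add0r size_polyC_leq1.
apply: leq_trans (size_polyD _ _) _; rewrite geq_max.
by rewrite (leq_trans (size_scale_leq _ _)) ?size_polyX // (leq_trans (size_polyC_leq1 _)).
Qed.

Lemma core (A B : 'I_q.-1 -> F) (j0 j1 : 'I_q.-1) :
  A j0 = 0 -> A j1 != 0 -> (forall j, A j = 0 -> B j != 0) ->
  exists s c : F, forall j, (s * A j + c * B j != 0) && (s * A j + c * B j != -1).
Proof.
move=> A0 A1 AB.
case: (pickP (fun sc : F * F => [forall j, (sc.1 * A j + sc.2 * B j != 0) && (sc.1 * A j + sc.2 * B j != -1)]))
  => [[s c] /forallP h | H]; first by exists s, c.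
exfalso.
pose Phi (mu : F) := \prod_j (A j * mu + B j).
pose K := \prod_(x : F | x != 0) x.
have K0 : K != 0.
  by apply/negP => /prodf_eq0 [x x0 /eqP xe]; rewrite xe eqxx in x0.
have C1 : forall mu, Phi mu != 0 -> Phi mu = K.
  move=> mu Pm.
  pose v j := A j * mu + B j.
  have vnz : forall j, v j != 0.
    by move=> j; apply/negP => /eqP e; move/negP: Pm; apply; apply/prodf_eq0; exists j => //; exact/eqP.
  have img : [set v j | j in setT] = [set x : F | x != 0].
    apply/setP => y; rewrite inE; apply/imsetP/idP.
      by case=> j _ ->; exact: vnz.
    move=> y0; have := H (- mu / y, - 1 / y); rewrite /=.
    move/negbT => /forallPn [j]; rewrite negb_and !negbK => hj.
    exists j; first by rewrite in_setT.
    have e : - mu / y * A j + - 1 / y * B j = - (v j / y).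
      by rewrite /v; rewrite !mulNr !mul1r mulrDl; ring.
    rewrite e in hj; case/orP: hj => /eqP hj.
      move/eqP: hj; rewrite oppr_eq0 mulf_eq0 invr_eq0 (negbTE y0) orbF.
      by rewrite (negbTE (vnz j)).
    by symmetry; apply: divr1_eq; move/eqP: hj; rewrite eqr_opp => /eqP.
  have inj : {in setT &, injective v}.
    apply/imset_injP; rewrite img cardsT card_ord cardsE cardC1 cardF.
    by [].
  rewrite /K (eq_bigl (fun x => x \in [set v j | j in setT])); last first.
    by move=> x; rewrite img inE.
  rewrite big_imset //=; apply: eq_bigl => j; by rewrite in_setT.
pose P : {poly F} := \prod_j (A j *: 'X + (B j)%:P).
have hP : forall mu, P.[mu] = Phi mu.
  move=> mu; rewrite horner_prod; apply: eq_bigr => j _.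
  by rewrite hornerD hornerZ hornerX hornerC.
have sP : (size P <= q.-1)%N.
  apply: leq_trans (size_poly_prod_leq _ _) _.
  have hs : (\sum_(j | true) size (A j *: 'X + (B j)%:P)%R <= (q.-1).*2.-1)%N.
    rewrite (bigD1 j0) //= A0 scale0r add0r.
    have h2 : forall j, (size (A j *: 'X + (B j)%:P)%R <= 2)%N.
      by move=> j; apply: leq_trans (fsize _ _) _; rewrite ltnS leq_b1.
    apply: (@leq_trans (1 + \sum_(i < q.-1 | i != j0) 2)%N).
      apply: leq_add; first exact: size_polyC_leq1.
      by apply: leq_sum => j _; exact: h2.
    rewrite sum_nat_const cardC1 card_ord.
    apply: arith2; exact: (leq_ltn_trans (leq0n j0) (ltn_ord j0)).
  rewrite cardT size_enum_ord.
  apply: arith1 hs; exact: (leq_ltn_trans (leq0n j0) (ltn_ord j0)).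
have C2 : \sum_(mu : F) Phi mu = 0.
  under eq_bigr do rewrite -hP (horner_coef_wide _ sP).
  rewrite exchange_big /=; apply: big1 => i _.
  by rewrite -mulr_sumr psum0 ?mulr0.
pose m := #|[pred mu : F | Phi mu != 0]|.
have C3 : \sum_(mu : F) Phi mu = K *+ m.
  rewrite (bigID (fun mu => Phi mu != 0)) /= [X in _ + X]big1; last first.
    by move=> mu; rewrite negbK => /eqP.
  rewrite addr0 (eq_bigr (fun _ => K)); last by move=> mu /C1.
  by rewrite sumr_const.
have Pnz : P != 0.
  apply/negP => /prodf_eq0 [j _ /eqP e].
  have := congr1 (fun p : {poly F} => p`_1) e.
  rewrite coefD coefZ coefX coefC /= mulr1 addr0 coef0 => Aj.
  have := congr1 (fun p : {poly F} => p`_0) e.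
  rewrite coefD coefZ coefX coefC /= mulr0 add0r coef0 => Bj.
  by move: (AB j Aj); rewrite Bj eqxx.
have m0 : (0 < m)%N.
  have [mu hmu] := @exists_not_root P Pnz sP.
  by apply/card_gt0P; exists mu; rewrite inE /= -hP.
have mq : (m < q)%N.
  rewrite -cardF -(cardC [pred mu : F | Phi mu != 0]) -/m -addn1 leq_add2l.
  apply/card_gt0P; exists (- B j1 / A j1); rewrite inE /= negbK.
  apply/prodf_eq0; exists j1 => //.
  by rewrite mulrCA mulfV // mulr1 addNr.
have : (m%:R : F) = 0.
  have : (m%:R : F) * K = 0 by rewrite mulr_natl -C3 C2.
  by move/eqP; rewrite mulf_eq0 (negbTE K0) orbF => /eqP.
move/eqP; rewrite -(dvdn_pcharf (pchar_Fp Hq)) => /(dvdn_leq m0).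
by rewrite leqNgt mq.
Qed.

End Core.

Lemma dist_ge (Q : int) (r c : rat) : c <= r -> c <= 1 - r -> 0 <= r -> r < 1 ->
  c <= dist_nint (Q%:~R + r).
Proof.
move=> h1 h2 h3 h4.
rewrite /dist_nint (@floor_def _ _ Q); last by rewrite intrD; apply/andP; split; lra.
rewrite intrD le_min; apply/andP; split; lra.
Qed.

Lemma frac_ge (a b q : nat) : (0 < b)%N -> (0 < q)%N -> (b <= q * a)%N ->
  1 / q%:R <= (a%:R / b%:R : rat).
Proof.
move=> b0 q0 h.
rewrite ler_pdivlMr ?ltr0n // mul1r ler_pdivrMl ?ltr0n // -natrM ler_nat.
by [].
Qed.

Lemma dist_nat (n u d q : nat) : (0 < d)%N -> (0 < q)%N ->
  (d <= q * (n * u %% d))%N -> (d <= q * (d - n * u %% d))%N ->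
  1 / q%:R <= dist_nint ((n%:Z)%:~R / d%:R * u%:R).
Proof.
move=> d0 q0 h1 h2.
have dn0 : (d%:R : rat) != 0 by rewrite pnatr_eq0 -lt0n.
have rd : (n * u %% d < d)%N by rewrite ltn_pmod.
have -> : (n%:Z)%:~R / d%:R * u%:R = ((n * u %/ d)%:Z)%:~R + ((n * u %% d)%:R / d%:R) :> rat.
  change ((n%:Z)%:~R) with (n%:R : rat); change (((n * u %/ d)%:Z)%:~R) with ((n * u %/ d)%:R : rat).
  rewrite mulrAC -natrM {1}(divn_eq (n * u) d) natrD natrM mulrDl mulfK //.
apply: dist_ge.
- exact: frac_ge.
- have -> : 1 - (n * u %% d)%:R / d%:R = ((d - n * u %% d)%:R / d%:R : rat).
    by rewrite natrB ?(ltnW rd) // mulrBl mulfV.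
  exact: frac_ge.
- by rewrite divr_ge0.
- by rewrite ltr_pdivrMr ?ltr0n // mul1r ltr_nat.
Qed.

End Aux.
Import Aux.

Theorem proposition4p4 (k p : nat) :
  (0 < k)%N -> prime k.+1 -> odd k.+1 ->
  prime p -> odd p -> (k * k.+1 < p)%N ->
  (forall u : 'I_k -> nat,
     tuple_in_Zpl k p k.+1 u ->
     (forall j : 'I_k, (u j %% p)%N = j.+1) ->
     kpl_proper k p k.+1 u)
  /\ eventually_proper k p (fun j : 'I_k => j.+1).
Proof.
move=> k0 Hq oq Hp op Hkp.
have p0 : (0 < p)%N := prime_gt0 Hp.
have part1 : forall u : 'I_k -> nat, (forall j : 'I_k, (u j %% p)%N = j.+1) ->
    kpl_proper k p k.+1 u.
  move=> u Hmod.
  case: (pickP (fun j => k.+1 %| u j)%N) => [j0 Hj0 | Hall0].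
  - case: (pickP (fun j => ~~ (k.+1 %| u j)%N)) => [j1 Hj1 | Hall1].
    + right.
      pose A (j : 'I_k) : 'F_k.+1 := ((u j)%:R)%R.
      pose B (j : 'I_k) : 'F_k.+1 := ((u j %/ p)%:R)%R.
      have chr := pchar_Fp Hq.
      have hA : forall j, (A j == 0)%R = (k.+1 %| u j)%N.
        by move=> j; rewrite (dvdn_pcharf chr).
      have hu : forall j : 'I_k, u j = (u j %/ p * p + j.+1)%N.
        by move=> j; rewrite {1}(divn_eq (u j) p) Hmod.
      have A0 : A j0 = 0%R by apply/eqP; rewrite hA.
      have A1 : A j1 != 0%R by rewrite hA.
      have AB : forall j, A j = 0%R -> B j != 0%R.
        move=> j /eqP; rewrite hA => hj; apply/negP; rewrite /B -(dvdn_pcharf chr) => hc.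
        have hc' : (k.+1 %| u j %/ p * p)%N by exact: dvdn_mulr.
        rewrite (hu j) (dvdn_addr _ hc') in hj.
        have := dvdn_leq (ltn0Sn _) hj; have := ltn_ord j; lia.
      have [s [c hsc]] := @core k.+1 Hq A B j0 j1 A0 A1 AB.
      have qE := Fp_cast Hq.
      have [s' sE s'q] : exists2 s' : nat, s = (s'%:R)%R & (s' < k.+1)%N.
        by exists (nat_of_ord s); [rewrite natr_Zp | rewrite -[in X in (_ < X)%N]qE ltn_ord].
      have [c' cE c'q] : exists2 c' : nat, c = (c'%:R)%R & (c' < k.+1)%N.
        by exists (nat_of_ord c); [rewrite natr_Zp | rewrite -[in X in (_ < X)%N]qE ltn_ord].
      exists (Posz (s' * p + c')) => j.
      move/andP: (hsc j) => [hM0 hM1].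
      rewrite sE cE /A /B -!natrM in hM0 hM1.
      set M := (s' * u j + c' * (u j %/ p))%N.
      have eM : (((s' * u j)%:R + (c' * (u j %/ p))%:R)%R : 'F_k.+1) = (M%:R)%R.
        by rewrite /M -mulrnDr.
      rewrite eM in hM0 hM1.
      rewrite -(dvdn_pcharf chr) in hM0.
      have hM1' : ~~ (k.+1 %| M.+1)%N.
        by rewrite (dvdn_pcharf chr) mulrS addrC addr_eq0.
      set m := (M %% k.+1)%N.
      have m0 : (0 < m)%N by rewrite lt0n.
      have mk' : m != k.
        apply: contra hM1' => /eqP mk.
        by rewrite /dvdn -addn1 -modnDml -/m mk addn1 modnn.
      have mk : (m < k)%N by rewrite ltn_neqAle mk' -ltnS ltn_mod.
      have he : (c' * j.+1 < p)%N.
        apply: leq_ltn_trans Hkp; apply: leq_mul; first by rewrite -ltnS.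
        exact: leqW (ltn_ord j).
      have huj := hu j.
      have hN : ((s' * p + c') * u j = p * M + c' * j.+1)%N.
        rewrite /M mulnDl [in (c' * u j)%N]huj; ring.
      have hlt : (p * m + c' * j.+1 < k.+1 * p)%N.
        apply: (@leq_trans (p * m + p)); first by rewrite ltn_add2l.
        by rewrite -mulnSr mulnC leq_pmul2r // ltnS ltnW.
      have hr : ((s' * p + c') * u j %% (k.+1 * p) = p * m + c' * j.+1)%N.
        rewrite hN {1}(divn_eq M k.+1) -/m.
        have -> : (p * (M %/ k.+1 * k.+1 + m) + c' * j.+1 = M %/ k.+1 * (k.+1 * p) + (p * m + c' * j.+1))%N by ring.
        by rewrite modnMDl modn_small.
      apply: dist_nat; rewrite ?muln_gt0 ?p0 // hr leq_pmul2l //.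
        exact: leq_trans (leq_pmulr p m0) (leq_addr _ _).
      rewrite leq_subRL ?(ltnW hlt) //.
      have hm : (p * m + p <= p * k)%N by rewrite -mulnSr leq_pmul2l.
      move: hm he; rewrite mulSn [(p * k)%N]mulnC; lia.
    + left; exists j0.
      have hq : (k.+1 %| \big[gcdn/0]_(j < k | j != j0) u j)%N.
        apply: (big_ind (fun g => k.+1 %| g)%N) => //.
          by move=> x y hx hy; rewrite dvdn_gcd hx hy.
        by move=> j _; move: (Hall1 j) => /negbFE.
      by rewrite (gcdn_idPl hq) ltnS.
  - right; exists (Posz p) => j.
    have hr : (p * u j %% (k.+1 * p) = p * (u j %% k.+1))%N.
      by rewrite [(k.+1 * p)%N]mulnC muln_modr.
    have r0 : (u j %% k.+1 != 0)%N by move: (Hall0 j); rewrite /dvdn => ->.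
    have r1 : (u j %% k.+1 < k.+1)%N by rewrite ltn_mod.
    apply: dist_nat; rewrite ?muln_gt0 ?p0 // hr leq_pmul2l //.
      by rewrite leq_pmulr // lt0n.
    rewrite [(k.+1 * p)%N]mulnC -mulnBr leq_pmulr //.
    by rewrite subn_gt0.
split; first by move=> u _; exact: part1.
exists k.+1; split => //; case=> v [_ [Himp Hproj]].
apply: Himp; apply: part1 => j.
by have := congr1 (fun f => f j) Hproj.
Qed.
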